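(* Let $1\le j\le r-1$. Then $$\ker\phi^{(j)}_{N,r}\;\cong\;\bigoplus_{n<N}\mathbf V_{N-n,r-j}\otimes\{v\in\mathsf{Vect}_{n,j}: vE_{n,j}=0\}.$$ (Concretely, writing $Q=\sum_{n<N}\sum_{(n_1,\dots,n_{r-j})\in S_{N-n,r-j}}x_1^{n_1-1}\cdots x_{r-j}^{n_{r-j}-1}R_{n_1,\dots,n_{r-j}}(x_{r-j+1},\dots,x_r)$ with $R_{n_1,\dots,n_{r-j}}\in\mathbf V_{n,j}$, one has $Q\in\ker\phi^{(j)}_{N,r}$ iff $\pi(R_{n_1,\dots,n_{r-j}})E_{n,j}=0$ for all components.)
   Context: For integers $N,r\ge1$ let $S_{N,r}=\{(n_1,\dots,n_r)\in\mathbb Z^r:\ n_1+\dots+n_r=N,\ \text{each } n_i\ge3 \text{ odd}\}$; when used as an index set it is ordered lexicographically decreasingly. $\mathbf V_{N,r}$ is the $\mathbb Q$-span of the monomials $x_1^{n_1-1}\cdots x_r^{n_r-1}$ with $(n_1,\dots,n_r)\in S_{N,r}$. $\mathsf{Vect}_{N,r}=\mathbb Q^{S_{N,r}}$ (row vectors), and $\pi:\mathbf V_{N,r}\to\mathsf{Vect}_{N,r}$ is the isomorphism sending $\sum a_{n_1,\dots,n_r}x_1^{n_1-1}\cdots x_r^{n_r-1}$ to $(a_{n_1,\dots,n_r})_{(n_1,\dots,n_r)\in S_{N,r}}$. Ihara action: for $f\in\mathbb Q[t]$ and a polynomial $g$ in $r-1$ variables, $(f\mathbin{\underline\circ}g)(x_1,\dots,x_r)=f(x_1)g(x_2,\dots,x_r)+\sum_{i=1}^{r-1}\big(f(x_{i+1}-x_i)g(x_1,\dots,\widehat{x_{i+1}},\dots,x_r)-(-1)^{\deg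 f}f(x_i-x_{i+1})g(x_1,\dots,\widehat{x_i},\dots,x_r)\big)$ (hats denote omitted variables). For positive integers $m_i,n_i$, $e\binom{m_1,\dots,m_r}{n_1,\dots,n_r}$ is the coefficient of $x_1^{n_1-1}\cdots x_r^{n_r-1}$ in $t^{m_1-1}\mathbin{\underline\circ}\,(y_1^{m_2-1}\cdots y_{r-1}^{m_r-1})$. $E_{N,r}$ is the $S_{N,r}\times S_{N,r}$ matrix with $(m,n)$-entry $e\binom{m}{n}$; for $j=1$ this is the $1\times1$ identity-type matrix on $S_{n,1}$ (entries $e\binom{m_1}{n_1}=\delta_{m_1n_1}$). The restricted totally even part of a polynomial is the sum of its monomials in which every variable $x_1,\dots,x_r$ occurs with even exponent $\ge2$. For $1\le j\le r$, $\phi^{(j)}_{N,r}:\mathbf V_{N,r}\to\mathbf V_{N,r}$ is the linear map sending $Q$ to the restricted totally even part of $Q(x_1,\dots,x_r)+\sum_{i=r-j+1}^{r-1}\big(Q(x_1,\dots,x_{r-j},x_{i+1}-x_i,x_{r-j+1},\dots,\widehat{x_{i+1}},\dots,x_r)-Q(x_1,\dots,x_{r-j},x_{i+1}-x_i,x_{r-j+1},\dots,\widehat{x_i},\dots,x_r)\big)$ (in each term the argument list after $x_{i+1}-x_i$ is $x_{r-j+1},\dots,x_r$ with one variable omitted). In particular $\phi^{(1)}_{N,r}=\mathrm{id}$. *)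

(* Defs.v *)
(* Multivariate polynomials over Q are built as iterated
   univariate polynomials: mpoly n = Q[x_0,...,x_{n-1}] (0-based variables),
   with x_{n-1} the outermost polynomial variable. *)
From HB Require Import structures.
From mathcomp Require Import all_boot all_order all_algebra.
Set Implicit Arguments. Unset Strict Implicit. Unset Printing Implicit Defensive.
Import Order.TTheory GRing.Theory Num.Theory.
Local Open Scope ring_scope.

Fixpoint mpoly (n : nat) : comNzRingType :=
  if n is n'.+1 then {poly (mpoly n')} else rat.

Fixpoint mX (n k : nat) {struct n} : mpoly n :=
  match n return mpoly n with
  | 0 => 0
  | n'.+1 => if k == n' then ('X : {poly mpoly n'}) else (mX n' k)%:P
  end.

Fixpoint mC (n : nat) (c : rat) {struct n} : mpoly n :=
  match n return mpoly n with
  | 0 => c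
  | n'.+1 => ((mC n' c)%:P : {poly mpoly n'})
  end.

Fixpoint msubst (n m : nat) (s : nat -> mpoly m) {struct n} : mpoly n -> mpoly m :=
  match n return mpoly n -> mpoly m with
  | 0 => fun p => mC m p
  | n'.+1 => fun p : {poly mpoly n'} =>
      \sum_(i < size p) msubst s p`_i * s n' ^+ i
  end.

Fixpoint mcoef (n : nat) (e : nat -> nat) {struct n} : mpoly n -> rat :=
  match n return mpoly n -> rat with
  | 0 => fun p => p
  | n'.+1 => fun p : {poly mpoly n'} => mcoef e p`_(e n')
  end.

Definition mmono (n : nat) (e : nat -> nat) : mpoly n :=
  \prod_(k < n) mX n k ^+ e k.

Fixpoint rte (n : nat) {struct n} : mpoly n -> mpoly n :=
  match n return mpoly n -> mpoly n with
  | 0 => fun p => p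
  | n'.+1 => fun p : {poly mpoly n'} =>
      \sum_(i < size p | ~~ odd i && (2 <= i)%N) (rte p`_i)%:P * 'X^i
  end.

Definition inS (N r : nat) (s : seq nat) : bool :=
  [&& size s == r, all (fun a => odd a && (3 <= a)%N) s & sumn s == N].

Definition expo (s : seq nat) (k : nat) : nat := (nth 1%N s k).-1.

Definition inV (N r : nat) (Q : mpoly r) : Prop :=
  forall e : nat -> nat, mcoef e Q != 0 -> inS N r (mkseq (fun k => (e k).+1) r).

(* phi^{(j)}_{r} (0-based variables; paper's x_i is mX r (i-1)) *)
Definition phi (r j : nat) (Q : mpoly r) : mpoly r :=
  let sub (i o : nat) :=
    msubst (fun p => if (p < r - j)%N then mX r p
                     else if p == (r - j)%N then mX r i - mX r i.-1
                     else mX r (bump o p.-1)) Q in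
  rte (Q + \sum_(r - j + 1 <= i < r) (sub i i - sub i i.-1)).

(* Ihara action f o g, f in Q[t] = mpoly 1, g in mpoly r, result in mpoly r.+1 *)
Definition ihara (r : nat) (f : mpoly 1) (g : mpoly r) : mpoly r.+1 :=
  let F (a : mpoly r.+1) := msubst (fun _ => a) f in
  let G (o : nat) := msubst (fun p => mX r.+1 (bump o p)) g in
  F (mX r.+1 0) * G 0 +
  \sum_(1 <= i < r.+1)
     (F (mX r.+1 i - mX r.+1 i.-1) * G i
      - (-1) ^+ (size (f : {poly rat})).-1 * F (mX r.+1 i.-1 - mX r.+1 i) * G i.-1).

Definition ecoef (r : nat) (m n : seq nat) : rat :=
  mcoef (expo n)
    (ihara (('X ^+ (nth 1%N m 0).-1)%R : {poly rat}) (mmono r (fun k => (nth 1%N m k.+1).-1))).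

(* pi(R_{s}) evaluated at index m: coefficient of
   x_1^(s_1-1)...x_{r-j}^(s_{r-j}-1) * x_{r-j+1}^(m_1-1)...x_r^(m_j-1) in Q *)
Definition piR (r : nat) (Q : mpoly r) (s m : seq nat) : rat :=
  mcoef (expo (s ++ m)) Q.

Arguments inV N r Q : clear implicits.
Arguments phi r j Q : clear implicits.
Arguments piR r Q s m : clear implicits.
Arguments ecoef r m n : clear implicits.

(* Main.v *)
Require Import Defs.
From HB Require Import structures.
From mathcomp Require Import all_boot all_order all_algebra.
From mathcomp Require Import zify.
Import GRing.Theory.
Local Open Scope ring_scope.

Lemma mcoefD n e (p q : mpoly n) : mcoef e (p + q) = mcoef e p + mcoef e q.
Proof. by elim: n e p q => [//|n IH] e p q /=; rewrite coefD IH. Qed.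

Lemma mcoef0 n e : mcoef e (0 : mpoly n) = 0.
Proof. by elim: n => [//|n IH] /=; rewrite coef0 IH. Qed.

Lemma mcoefN n e (p : mpoly n) : mcoef e (- p) = - mcoef e p.
Proof. by elim: n e p => [//|n IH] e p /=; rewrite coefN IH. Qed.

Lemma mcoefB n e (p q : mpoly n) : mcoef e (p - q) = mcoef e p - mcoef e q.
Proof. by rewrite mcoefD mcoefN. Qed.

Lemma mcoef_sum n e (I : Type) (r : seq I) (P : pred I) (F : I -> mpoly n) :
  mcoef e (\sum_(i <- r | P i) F i) = \sum_(i <- r | P i) mcoef e (F i).
Proof. by apply: big_morph; [exact: mcoefD | exact: mcoef0]. Qed.

Lemma mcoefCM n e c (p : mpoly n) : mcoef e (mC n c * p) = c * mcoef e p.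
Proof. by elim: n e p => [//|n IH] e p /=; rewrite coefCM IH. Qed.

Definition agree n (e t : nat -> nat) := all (fun k => e k == t k) (iota 0 n).

Lemma agreeP n e t : reflect (forall k, (k < n)%N -> e k = t k) (agree n e t).
Proof.
apply: (iffP allP) => H k.
  by move=> Hk; apply/eqP/H; rewrite mem_iota.
by rewrite mem_iota => /andP[_ Hk]; apply/eqP/H.
Qed.

Lemma agreeS n e t : agree n.+1 e t = agree n e t && (e n == t n).
Proof. by rewrite /agree -addn1 iotaD all_cat /= andbT. Qed.

Lemma mcoef_eq n e e' (p : mpoly n) : (forall k, (k < n)%N -> e k = e' k) ->
  mcoef e p = mcoef e' p.
Proof.
elim: n p => [//|n IH] p H /=.
rewrite H // IH // => k Hk; apply: H; exact: ltnW.
Qed.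

Lemma mpoly_ext n (p q : mpoly n) : (forall e, mcoef e p = mcoef e q) -> p = q.
Proof.
elim: n p q => [|n IH] p q H; first exact: (H (fun _ => 0%N)).
apply/polyP => i; apply: IH => e'.
pose e k := if k == n then i else e' k.
have := H e; rewrite /= /e eqxx => He.
have Hee : forall k, (k < n)%N -> e k = e' k by move=> k Hk; rewrite /e (ltn_eqF Hk).
by rewrite -(mcoef_eq _ _ _ _ Hee) He (mcoef_eq _ _ _ _ Hee).
Qed.

Lemma mmono_eq n t u : (forall k, (k < n)%N -> t k = u k) -> mmono n t = mmono n u.
Proof. by move=> H; apply: eq_bigr => k _; rewrite H. Qed.

Lemma mmonoS n t : mmono n.+1 t = (mmono n t)%:P * 'X^(t n).
Proof.
rewrite /mmono big_ord_recr /= eqxx rmorph_prod; congr (_ * _).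
apply: eq_bigr => k _ /=; rewrite (ltn_eqF (ltn_ord k)) rmorphXn //.
Qed.

Lemma mcoef_mmono n e t : mcoef e (mmono n t) = (agree n e t)%:R.
Proof.
elim: n e => [|n IH] e; first by rewrite /mmono big_ord0.
rewrite mmonoS /= coefCM coefXn agreeS.
case: eqP => _; last by rewrite mulr0 mcoef0 andbF.
by rewrite mulr1 IH andbT.
Qed.

Lemma mmonoD n t u : mmono n (fun k => t k + u k)%N = mmono n t * mmono n u.
Proof. by rewrite /mmono -big_split /=; apply: eq_bigr => k _; rewrite exprD. Qed.

Fixpoint mbound (n : nat) : mpoly n -> nat :=
  match n return mpoly n -> nat with
  | 0 => fun _ => 0%N
  | n'.+1 => fun p : {poly mpoly n'} =>
      maxn (size p) (\max_(i < size p) mbound n' (p`_i)%R)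
  end.

Lemma mboundP n (p : mpoly n) e : mcoef e p != 0 -> forall k, (k < n)%N -> (e k < mbound n p)%N.
Proof.
elim: n p e => [//|n IH] p e /= Hne k Hk.
have Hs : (e n < size p)%N.
  rewrite ltnNge; apply/negP => Hle; move: Hne; rewrite nth_default // mcoef0 eqxx //.
rewrite leq_max; rewrite ltnS leq_eqVlt in Hk; case/orP: Hk => [/eqP->|Hk].
  by rewrite Hs.
apply/orP; right; apply: (leq_trans (IH _ _ Hne _ Hk)).
exact: (@leq_bigmax _ (fun i : 'I_(size p) => mbound n (p`_i)%R) (Ordinal Hs)).
Qed.

Definition ef n D (f : {ffun 'I_n -> 'I_D}) (k : nat) : nat :=
  match (insub k : option 'I_n) with Some i => nat_of_ord (f i) | None => 0%N end.
Arguments ef {n D} f k.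

Lemma efE n D (f : {ffun 'I_n -> 'I_D}) (i : 'I_n) : ef f i = f i.
Proof. by rewrite /ef valK. Qed.
Arguments efE {n D} f i.

Lemma mcoef_decomp n (p : mpoly n) D e :
  (forall e, mcoef e p != 0 -> forall k, (k < n)%N -> (e k < D)%N) ->
  mcoef e p = \sum_(f : {ffun 'I_n -> 'I_D}) mcoef (ef f) p * (agree n e (ef f))%:R.
Proof.
move=> HD.
case: (boolP [forall k : 'I_n, (e k < D)%N]) => HA.
  pose f0 := [ffun k : 'I_n => Ordinal (forallP HA k)].
  have Hf0 : forall k, (k < n)%N -> ef f0 k = e k.
    by move=> k Hk; have := efE f0 (Ordinal Hk); rewrite ffunE.
  rewrite (bigD1 f0) //= big1 ?addr0.
    have -> : agree n e (ef f0) by apply/agreeP => k Hk; rewrite Hf0.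
    by rewrite mulr1; apply: mcoef_eq => k Hk; rewrite Hf0.
  move=> f Hf; case: (boolP (agree n e (ef f))) => Ha; last by rewrite mulr0.
  case/eqP: Hf; apply/ffunP => k; apply: val_inj.
  by rewrite ffunE /= -efE; move/agreeP: Ha => <-.
have [k Hk] : exists k : 'I_n, ~~ (e k < D)%N.
  by move: HA; rewrite negb_forall => /existsP.
have -> : mcoef e p = 0.
  apply/eqP; apply: contraR Hk => /HD H; exact: H.
rewrite big1 // => f _; case: (boolP (agree n e (ef f))) => Ha; last by rewrite mulr0.
by move: Hk; move/agreeP: Ha => -> //; rewrite efE ltn_ord.
Qed.

Lemma mC_rm m : exists g : {rmorphism rat -> mpoly m}, mC m =1 g.
Proof.
elim: m => [|m [g Hg]]; first by exists idfun.
by exists (polyC \o g) => c /=; rewrite Hg.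
Qed.

Lemma mC0 m : mC m 0 = 0. Proof. by have [g Hg] := mC_rm m; rewrite Hg rmorph0. Qed.
Lemma mC1 m : mC m 1 = 1. Proof. by have [g Hg] := mC_rm m; rewrite Hg rmorph1. Qed.
Lemma mCM m a b : mC m (a * b) = mC m a * mC m b.
Proof. by have [g Hg] := mC_rm m; rewrite !Hg rmorphM. Qed.

Lemma msubst_rm n m (s : nat -> mpoly m) :
  exists g : {rmorphism mpoly n -> mpoly m}, msubst s =1 g.
Proof.
elim: n => [|n [g Hg]]; first exact: mC_rm.
exists (horner_eval (s n) \o map_poly g) => p /=.
rewrite /horner_eval (horner_coef_wide _ (size_poly _ _)).
apply: eq_bigr => i _; by rewrite coef_map Hg.
Qed.

Lemma msubstD n m (s : nat -> mpoly m) (p q : mpoly n) : msubst s (p + q) = msubst s p + msubst s q.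
Proof. by have [g Hg] := msubst_rm n m s; rewrite !Hg rmorphD. Qed.
Lemma msubstB n m (s : nat -> mpoly m) (p q : mpoly n) : msubst s (p - q) = msubst s p - msubst s q.
Proof. by have [g Hg] := msubst_rm n m s; rewrite !Hg rmorphB. Qed.
Lemma msubstM n m (s : nat -> mpoly m) (p q : mpoly n) : msubst s (p * q) = msubst s p * msubst s q.
Proof. by have [g Hg] := msubst_rm n m s; rewrite !Hg rmorphM. Qed.
Lemma msubstX n m (s : nat -> mpoly m) (p : mpoly n) k : msubst s (p ^+ k) = msubst s p ^+ k.
Proof. by have [g Hg] := msubst_rm n m s; rewrite !Hg rmorphXn. Qed.
Lemma msubst0 n m (s : nat -> mpoly m) : msubst s (0 : mpoly n) = 0.
Proof. by have [g Hg] := msubst_rm n m s; rewrite !Hg rmorph0. Qed.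
Lemma msubst1 n m (s : nat -> mpoly m) : msubst s (1 : mpoly n) = 1.
Proof. by have [g Hg] := msubst_rm n m s; rewrite !Hg rmorph1. Qed.
Lemma msubst_sum n m (s : nat -> mpoly m) I (r : seq I) (P : pred I) (F : I -> mpoly n) :
  msubst s (\sum_(i <- r | P i) F i) = \sum_(i <- r | P i) msubst s (F i).
Proof. by have [g Hg] := msubst_rm n m s; rewrite !Hg rmorph_sum; apply: eq_bigr => i _; rewrite Hg. Qed.
Lemma msubst_prod n m (s : nat -> mpoly m) I (r : seq I) (P : pred I) (F : I -> mpoly n) :
  msubst s (\prod_(i <- r | P i) F i) = \prod_(i <- r | P i) msubst s (F i).
Proof. by have [g Hg] := msubst_rm n m s; rewrite !Hg rmorph_prod; apply: eq_bigr => i _; rewrite Hg. Qed.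

Lemma msubstS n m (s : nat -> mpoly m) (p : mpoly n.+1) :
  msubst s p = (map_poly (msubst s) p).[s n].
Proof.
rewrite /= (horner_coef_wide _ (size_poly _ _)).
by apply: eq_bigr => i _; rewrite coef_map_id0 // msubst0.
Qed.

Lemma msubst_mC n m (s : nat -> mpoly m) c : msubst s (mC n c) = mC m c.
Proof.
elim: n => [//|n IH]; rewrite msubstS. change (mC n.+1 c) with ((mC n c)%:P : {poly mpoly n}). have [g Hg] := msubst_rm n m s; rewrite (eq_map_poly Hg) map_polyC hornerC -IH Hg; reflexivity.
Qed.

Lemma msubst_mX n m (s : nat -> mpoly m) k : (k < n)%N -> msubst s (mX n k) = s k.
Proof.
elim: n => [//|n IH] Hk; rewrite msubstS /=.
have [g Hg] := msubst_rm n m s; rewrite (eq_map_poly Hg).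
case: eqP => [->|Hne].
  by rewrite map_polyX hornerX.
rewrite map_polyC hornerC; transitivity (msubst s (mX n k)); first by rewrite Hg; reflexivity.
rewrite IH //.
by rewrite ltnS leq_eqVlt in Hk; case/orP: Hk => // /eqP.
Qed.

Lemma msubst_mmono n m (s : nat -> mpoly m) t :
  msubst s (mmono n t) = \prod_(k < n) s k ^+ t k.
Proof.
rewrite /mmono msubst_prod; apply: eq_bigr => k _.
by rewrite msubstX msubst_mX.
Qed.

Lemma msubstCM n m (s : nat -> mpoly m) c p :
  msubst s (mC n c * p) = mC m c * msubst s p.
Proof. by rewrite msubstM msubst_mC. Qed.

Lemma mcoef_lin n m (L : mpoly n -> mpoly m) (p : mpoly n) D e :
  (forall p q, L (p + q) = L p + L q) -> L 0 = 0 ->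
  (forall c p, L (mC n c * p) = mC m c * L p) ->
  (forall e, mcoef e p != 0 -> forall k, (k < n)%N -> (e k < D)%N) ->
  mcoef e (L p) = \sum_(f : {ffun 'I_n -> 'I_D}) mcoef (ef f) p * mcoef e (L (mmono n (ef f))).
Proof.
move=> LD L0 LC HD.
have Hp : p = \sum_(f : {ffun 'I_n -> 'I_D}) mC n (mcoef (ef f) p) * mmono n (ef f).
  apply: mpoly_ext => e'; rewrite (mcoef_decomp _ _ _ e' HD) mcoef_sum.
  by apply: eq_bigr => f _; rewrite mcoefCM mcoef_mmono.
rewrite {1}Hp (big_morph L LD L0) mcoef_sum; apply: eq_bigr => f _.
by rewrite LC mcoefCM.
Qed.

Lemma mdecomp n (p : mpoly n) :
  p = \sum_(f : {ffun 'I_n -> 'I_(mbound n p)}) mC n (mcoef (ef f) p) * mmono n (ef f).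
Proof.
apply: mpoly_ext => e'; rewrite (mcoef_decomp _ _ _ e' (@mboundP n p)) mcoef_sum.
by apply: eq_bigr => f _; rewrite mcoefCM mcoef_mmono.
Qed.

Definition mhom n d (p : mpoly n) :=
  forall e, mcoef e p != 0 -> (\sum_(k < n) e k)%N = d.
Arguments mhom {n} d p.

Lemma hom0 n d : mhom d (0 : mpoly n).
Proof. by move=> e; rewrite mcoef0 eqxx. Qed.

Lemma homD n d (p q : mpoly n) : mhom d p -> mhom d q -> mhom d (p + q).
Proof.
move=> Hp Hq e; rewrite mcoefD.
case: (boolP (mcoef e p == 0)) => [/eqP->|/Hp //]; rewrite add0r; exact: Hq.
Qed.

Lemma homN n d (p : mpoly n) : mhom d p -> mhom d (- p).
Proof. by move=> Hp e; rewrite mcoefN oppr_eq0; exact: Hp. Qed.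

Lemma homB n d (p q : mpoly n) : mhom d p -> mhom d q -> mhom d (p - q).
Proof. by move=> Hp Hq; apply: homD => //; exact: homN. Qed.

Lemma homCM n d c (p : mpoly n) : mhom d p -> mhom d (mC n c * p).
Proof.
move=> Hp e; rewrite mcoefCM; case: (boolP (mcoef e p == 0)) => [/eqP->|/Hp //].
by rewrite mulr0 eqxx.
Qed.

Lemma hom_sum n d I (r : seq I) (P : pred I) (F : I -> mpoly n) :
  (forall i, P i -> mhom d (F i)) -> mhom d (\sum_(i <- r | P i) F i).
Proof.
move=> H; elim/big_rec: _ => [|i x Pi Hx]; first exact: hom0.
by apply: homD => //; exact: H.
Qed.

Lemma hom_mmono n (t : nat -> nat) : mhom (\sum_(k < n) t k)%N (mmono n t).
Proof.
move=> e; rewrite mcoef_mmono; case: (boolP (agree n e t)) => [/agreeP Ha _|]; last by rewrite eqxx.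
by apply: eq_bigr => k _; rewrite Ha.
Qed.

Lemma homM n d1 d2 (p q : mpoly n) : mhom d1 p -> mhom d2 q -> mhom (d1 + d2) (p * q).
Proof.
move=> Hp Hq; rewrite (mdecomp _ p) (mdecomp _ q) mulr_suml.
apply: hom_sum => f _; rewrite mulr_sumr; apply: hom_sum => g _.
case: (boolP (mcoef (ef f) p == 0)) => [/eqP->|Hf].
  rewrite mC0 !mul0r; exact: hom0.
case: (boolP (mcoef (ef g) q == 0)) => [/eqP->|Hg].
  rewrite mC0 !mul0r mulr0; exact: hom0.
rewrite mulrACA -mCM -mmonoD; apply: homCM.
rewrite -(Hp _ Hf) -(Hq _ Hg) -big_split /=; exact: hom_mmono.
Qed.

Lemma hom1 n : mhom 0 (1 : mpoly n).
Proof.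
have -> : (1 : mpoly n) = mmono n (fun _ => 0%N) by rewrite /mmono big1.
by move: (hom_mmono n (fun _ => 0%N)); rewrite big1.
Qed.

Lemma homX n d (p : mpoly n) k : mhom d p -> mhom (d * k) (p ^+ k).
Proof.
move=> Hp; elim: k => [|k IH]; first by rewrite muln0 expr0; exact: hom1.
by rewrite exprS mulnS; apply: homM.
Qed.

Lemma hom_prod n I (r : seq I) (P : pred I) (F : I -> mpoly n) (d : I -> nat) :
  (forall i, P i -> mhom (d i) (F i)) -> mhom (\sum_(i <- r | P i) d i)%N (\prod_(i <- r | P i) F i).
Proof.
move=> H; elim/big_rec2: _ => [|i x y Pi Hy]; first exact: hom1.
by apply: homM => //; exact: H.
Qed.

Lemma hom_mX n k : (k < n)%N -> mhom 1 (mX n k).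
Proof.
move=> Hk; have -> : mX n k = mmono n (fun i => (i == k) : nat).
  rewrite /mmono (bigD1 (Ordinal Hk)) //= eqxx expr1 big1 ?mulr1 // => i Hi.
  by rewrite (_ : (i == k :> nat) = false) // ; apply/negP => /eqP Hik; case/eqP: Hi; apply: val_inj.
have := hom_mmono n (fun i => (i == k) : nat).
rewrite (bigD1 (Ordinal Hk)) //= eqxx big1 // => i Hi.
by rewrite (_ : (i == k :> nat) = false) // ; apply/negP => /eqP Hik; case/eqP: Hi; apply: val_inj.
Qed.

Lemma hom_msubst n m (s : nat -> mpoly m) d (p : mpoly n) :
  (forall k, (k < n)%N -> mhom 1 (s k)) -> mhom d p -> mhom d (msubst s p).
Proof.
move=> Hs Hp; rewrite (mdecomp _ p) msubst_sum; apply: hom_sum => f _.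
rewrite msubstCM msubst_mmono.
case: (boolP (mcoef (ef f) p == 0)) => [/eqP->|Hf].
  rewrite mC0 mul0r; exact: hom0.
apply: homCM; rewrite -(Hp _ Hf).
have -> : (\sum_(k < n) ef f k)%N = (\sum_(k < n) 1 * ef f k)%N by apply: eq_bigr => k _; rewrite mul1n.
apply: hom_prod => k _; apply: homX; exact: Hs.
Qed.

Definition allev n (e : nat -> nat) := all (fun k => ~~ odd (e k) && (2 <= e k)%N) (iota 0 n).

Lemma allevS n e : allev n.+1 e = allev n e && (~~ odd (e n) && (2 <= e n)%N).
Proof. by rewrite /allev -(addn1 n) iotaD all_cat /= andbT. Qed.

Lemma rte0 n : rte (0 : mpoly n) = 0.
Proof. by case: n => [//|n] /=; rewrite size_poly0 big_ord0. Qed.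

Lemma mcoef_rte n e (p : mpoly n) :
  mcoef e (rte p) = if allev n e then mcoef e p else 0.
Proof.
elim: n e p => [//|n IH] e p /=.
rewrite coef_sum.
under eq_bigr do rewrite coefCM coefXn.
rewrite allevS.
case: (ltnP (e n) (size p)) => Hs.
  rewrite big_mkcond (bigD1 (Ordinal Hs)) //= eqxx mulr1 big1 ?addr0.
    case: ifP => HP; case: ifP => HQ; rewrite ?mcoef0 ?andbT ?andbF // in HQ *.
    - by rewrite IH HQ.
    - by rewrite IH HQ.
  move=> i Hi; case: ifP => // _.
  rewrite (_ : (e n == i) = false) ?mulr0 //.
  by apply/negP => /eqP Hei; case/eqP: Hi; apply: val_inj.
rewrite big1 => [|i _].
  by rewrite mcoef0 nth_default // mcoef0; case: ifP.
rewrite (_ : (e n == i) = false) ?mulr0 //.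
apply/negP => /eqP Hei; move: (ltn_ord i); rewrite -Hei ltnNge Hs //.
Qed.

Lemma hom_rte n d (p : mpoly n) : mhom d p -> mhom d (rte p).
Proof. by move=> Hp e; rewrite mcoef_rte; case: ifP => _; [exact: Hp | rewrite eqxx]. Qed.

Lemma prod_split (R : comNzRingType) r a (F : nat -> R) : (a <= r)%N ->
  \prod_(k < r) F k = \prod_(k < a) F k * \prod_(k < r - a) F (a + k)%N.
Proof.
move=> Har; rewrite -!(big_mkord xpredT) (big_cat_nat (leq0n a) Har) /=.
congr (_ * _); rewrite -{1}[a]add0n big_addn.
by rewrite big_mkord; apply: eq_bigr => k _; rewrite addnC.
Qed.

Definition pre a (t : nat -> nat) k := if (k < a)%N then t k else 0%N.

Lemma mmono_pre r a t : (a <= r)%N ->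
  mmono r (pre a t) = \prod_(k < a) mX r k ^+ t k.
Proof.
move=> Har; rewrite /mmono (prod_split _ _ _ (fun k => mX r k ^+ pre a t k) Har) [X in _ * X]big1 ?mulr1.
  apply: eq_bigr => k _; by rewrite /pre ltn_ord.
by move=> k _; rewrite /pre ltnNge leq_addr.
Qed.

Definition sfn r j (i o : nat) : nat -> mpoly r := fun p =>
  if (p < r - j)%N then mX r p
  else if p == (r - j)%N then mX r i - mX r i.-1
  else mX r (bump o p.-1).

Definition phipre r j (Q : mpoly r) : mpoly r :=
  Q + \sum_(r - j + 1 <= i < r) (msubst (sfn r j i i) Q - msubst (sfn r j i i.-1) Q).

Lemma phiE r j Q : phi r j Q = rte (phipre r j Q).
Proof. by []. Qed.

Lemma sub_mono r a j' i o t : r = (a + j'.+1)%N ->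
  msubst (sfn r j'.+1 i o) (mmono r t) =
  mmono r (pre a t) * ((mX r i - mX r i.-1) ^+ t a *
     \prod_(k < j') mX r (bump o (a + k)) ^+ t (a + k.+1)%N).
Proof.
move=> Hr; have Ha : (r - j'.+1)%N = a by lia.
have Har : (a <= r)%N by lia.
rewrite msubst_mmono (prod_split _ _ _ (fun k => sfn r j'.+1 i o k ^+ t k) Har) mmono_pre //; congr (_ * _).
  by apply: eq_bigr => k _; rewrite /sfn Ha ltn_ord.
have -> : (r - a)%N = j'.+1 by lia.
rewrite big_ord_recl /sfn Ha /= addn0 ltnn eqxx; congr (_ * _).
apply: eq_bigr => k _ /=; rewrite /bump /= add1n.
have -> : (a + k.+1 < a)%N = false by lia.
have -> : (a + k.+1 == a) = false by lia.
by rewrite addnS.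
Qed.

Definition Ih j' a (t : nat -> nat) : mpoly j'.+1 :=
  ihara (('X ^+ t a)%R : {poly rat}) (mmono j' (fun k => t (a + k.+1)%N)).

Lemma F_eval m (z : mpoly m) b :
  msubst (n:=1) (fun _ => z) (('X ^+ b)%R : {poly rat}) = z ^+ b.
Proof.
rewrite msubstX; congr (_ ^+ _).
have -> : ('X : {poly rat}) = mX 1 0 by [].
by rewrite msubst_mX.
Qed.

Definition sh r a (p : nat) : mpoly r := mX r (a + p).

Lemma G_eval r a j' o (u : nat -> nat) : (a + j'.+1 <= r)%N ->
  msubst (sh r a) (msubst (fun p => mX j'.+1 (bump o p)) (mmono j' u)) =
  \prod_(k < j') mX r (a + bump o k) ^+ u k.
Proof.
move=> Hr; rewrite msubst_mmono msubst_prod; apply: eq_bigr => k _.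
rewrite msubstX msubst_mX //; rewrite /bump; have := ltn_ord k; lia.
Qed.

Lemma sh_mX r a j i : (a + j <= r)%N -> (i < j)%N -> msubst (sh r a) (mX j i) = mX r (a + i).
Proof. by move=> H Hi; rewrite msubst_mX. Qed.

Lemma bumpD a o k : bump (a + o) (a + k) = (a + bump o k)%N.
Proof. rewrite /bump leq_add2l; lia. Qed.

Lemma msubstN n m (s : nat -> mpoly m) (p : mpoly n) : msubst s (- p) = - msubst s p.
Proof. by have [g Hg] := msubst_rm n m s; rewrite !Hg rmorphN. Qed.

Lemma mmono_split r a j' t : r = (a + j'.+1)%N ->
  mmono r t = mmono r (pre a t) * (mX r a ^+ t a *
     \prod_(k < j') mX r (a + k.+1) ^+ t (a + k.+1)%N).
Proof.
move=> Hr; have Har : (a <= r)%N by lia.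
rewrite {1}/mmono (prod_split _ _ _ (fun k => mX r k ^+ t k) Har) mmono_pre //; congr (_ * _).
have -> : (r - a)%N = j'.+1 by lia.
by rewrite big_ord_recl /= addn0.
Qed.

Lemma key r a j' t : r = (a + j'.+1)%N ->
  phipre r j'.+1 (mmono r t) = mmono r (pre a t) * msubst (sh r a) (Ih j' a t).
Proof.
move=> Hr; have Ha : (r - j'.+1)%N = a by lia.
have Hle : (a + j'.+1 <= r)%N by lia.
rewrite /phipre /Ih /ihara Ha; cbv zeta.
rewrite msubstD msubst_sum mulrDr; congr (_ + _).
  rewrite msubstM F_eval msubstX sh_mX // G_eval // (mmono_split _ _ _ _ Hr).
  congr (_ * (_ * _)); first by rewrite addn0.
rewrite mulr_sumr addnC big_addn.
have -> : (r - a)%N = j'.+1 by lia.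
apply: eq_big_nat => i /andP[Hi1 Hij].
rewrite !(sub_mono _ _ _ _ _ _ Hr) msubstB mulrBr; congr (_ * _ - _ * _).
  rewrite msubstM F_eval msubstX msubstB !sh_mX // ?G_eval //; try lia.
  congr (_ ^+ _ * _).
    by congr (mX r _ - mX r _); lia.
  by apply: eq_bigr => k _; rewrite addnC bumpD.
rewrite !msubstM F_eval !msubstX msubstN msubst1 msubstB !sh_mX // ?G_eval //; try lia.
rewrite size_polyXn /= -exprMn mulN1r opprB; congr (_ ^+ _ * _).
  by congr (mX r _ - mX r _); lia.
apply: eq_bigr => k _; have -> : (i + a).-1 = (a + i.-1)%N by lia.
by rewrite bumpD.
Qed.

Lemma comb_mono r a j t (u : nat -> nat) : r = (a + j)%N ->
  mmono r (pre a t) * msubst (sh r a) (mmono j u) =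
  mmono r (fun k => if (k < a)%N then t k else u (k - a)%N).
Proof.
move=> Hr; have Har : (a <= r)%N by lia.
rewrite msubst_mmono mmono_pre // /mmono
  (prod_split _ _ _ (fun k => mX r k ^+ (if (k < a)%N then t k else u (k - a)%N)) Har).
congr (_ * _); first by apply: eq_bigr => k _; rewrite ltn_ord.
have -> : (r - a)%N = j by lia.
apply: eq_bigr => k _; rewrite ltnNge leq_addr /= addKn //.
Qed.

Lemma agree_comb a j e t (u : nat -> nat) :
  agree (a + j) e (fun k => if (k < a)%N then t k else u (k - a)%N) =
  agree a e t && agree j (fun k => e (a + k)%N) u.
Proof.
apply/agreeP/andP => [H|[/agreeP H1 /agreeP H2] k Hk].
  split; apply/agreeP => k Hk.
    by rewrite H ?Hk //; lia.
  by rewrite H; [rewrite ltnNge leq_addr /= addKn | lia].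
case: ifP => Hka; first exact: H1.
by rewrite -H2; [congr e; lia | lia].
Qed.

Lemma PL r a j e t (H : mpoly j) : r = (a + j)%N ->
  mcoef e (mmono r (pre a t) * msubst (sh r a) H) =
  (agree a e t)%:R * mcoef (fun k => e (a + k)%N) H.
Proof.
move=> Hr.
pose L := fun H : mpoly j => mmono r (pre a t) * msubst (sh r a) H.
have -> : mmono r (pre a t) * msubst (sh r a) H = L H by [].
rewrite (mcoef_lin _ _ L H (mbound j H) e).
- rewrite (mcoef_decomp _ H _ (fun k => e (a + k)%N) (@mboundP j H)) mulr_sumr.
  apply: eq_bigr => f _; rewrite /L comb_mono // mcoef_mmono Hr agree_comb.
  by case: (agree a e t); rewrite ?mul1r ?mul0r ?mulr0.
- by move=> p q; rewrite /L msubstD mulrDr.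
- by rewrite /L msubst0 mulr0.
- by move=> c p; rewrite /L msubstCM mulrCA.
- exact: mboundP.
Qed.

Lemma coef_phipre_mono r a j' e t : r = (a + j'.+1)%N ->
  mcoef e (phipre r j'.+1 (mmono r t)) =
  (agree a e t)%:R * mcoef (fun k => e (a + k)%N) (Ih j' a t).
Proof. by move=> Hr; rewrite (key _ _ _ _ Hr) (PL _ _ _ _ _ _ Hr). Qed.

Lemma mkseqD (f : nat -> nat) m n :
  mkseq f (m + n) = mkseq f m ++ mkseq (fun k => f (m + k)%N) n.
Proof. rewrite /mkseq iotaD map_cat add0n; congr (_ ++ _); by rewrite -[m in iota m _]addn0 iotaDl -map_comp. Qed.

Lemma leq_sumn_mem (l : seq nat) x : x \in l -> (x <= sumn l)%N.
Proof.
elim: l => [//|y l IH]; rewrite inE /= => /orP[/eqP->|/IH H]; first exact: leq_addr.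
exact: (leq_trans H (leq_addl _ _)).
Qed.

Lemma phipreD r j (p q : mpoly r) : phipre r j (p + q) = phipre r j p + phipre r j q.
Proof.
rewrite /phipre; under eq_bigr => i _ do rewrite !msubstD opprD addrACA.
by rewrite big_split /= addrACA.
Qed.

Lemma phipre0 r j : phipre r j 0 = 0.
Proof. by rewrite /phipre big1 ?addr0 // => i _; rewrite !msubst0 subrr. Qed.

Lemma phipreCM r j c (p : mpoly r) : phipre r j (mC r c * p) = mC r c * phipre r j p.
Proof.
rewrite /phipre mulrDr mulr_sumr; congr (_ + _).
by apply: eq_bigr => i _; rewrite !msubstCM mulrBr.
Qed.

Lemma expo_cat_lt (s v : seq nat) k : (k < size s)%N -> expo (s ++ v) k = expo s k.
Proof. by move=> Hk; rewrite /expo nth_cat Hk. Qed.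

Lemma expo_cat_ge (s v : seq nat) k : expo (s ++ v) (size s + k) = expo v k.
Proof. by rewrite /expo nth_cat ltnNge leq_addr /= addKn. Qed.

Lemma eq_in_mkseq (f g : nat -> nat) n : (forall k, (k < n)%N -> f k = g k) ->
  mkseq f n = mkseq g n.
Proof. move=> H; apply/eq_in_map => k; rewrite mem_iota add0n => /andP[_]; exact: H. Qed.

Lemma tuple_of_seq M j (l : seq nat) : size l = j -> all (fun x => x <= M)%N l ->
  exists v : j.-tuple 'I_M.+1, map val v = l.
Proof.
move=> Hs Ha.
have Hsz : size (map (@inord M) l) == j by rewrite size_map Hs.
exists (Tuple Hsz) => /=; rewrite -map_comp; apply: map_id_in => x Hx /=.
by rewrite inordK // ltnS; move/allP: Ha; apply.
Qed.

Lemma inS_pos M j l : inS M j l -> all (fun x => 0 < x)%N l.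
Proof.
case/and3P=> _ Ha _; apply/allP => x Hx; move/allP: Ha => /(_ x Hx) /andP[_]; lia.
Qed.

Lemma tuple_eq_expo j M (s : seq nat) (v v0 : j.-tuple 'I_M.+1) :
  all (fun x => 0 < x)%N (map val v) -> all (fun x => 0 < x)%N (map val v0) ->
  (forall k, (k < j)%N -> expo (s ++ map val v) (size s + k) = expo (s ++ map val v0) (size s + k)) ->
  v = v0.
Proof.
move=> Hp Hp0 H; apply: val_inj; apply: (inj_map val_inj).
apply: (@eq_from_nth _ 0%N); first by rewrite !size_map !size_tuple.
move=> k; rewrite size_map size_tuple => Hk.
have := H k Hk; rewrite !expo_cat_ge /expo.
rewrite !(nth_map ord0 1%N) ?(nth_map ord0 0%N) ?size_tuple //.
have : (0 < nth 1%N (map val v) k)%N by move/allP: Hp; apply; apply: mem_nth; rewrite size_map size_tuple.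
have : (0 < nth 1%N (map val v0) k)%N by move/allP: Hp0; apply; apply: mem_nth; rewrite size_map size_tuple.
rewrite !(nth_map ord0 1%N) ?size_tuple // => A B C.
by rewrite -[LHS](prednK B) -[RHS](prednK A) C.
Qed.

Lemma formula N r a j' (Q : mpoly r) e : r = (a + j'.+1)%N -> inV N r Q ->
  mcoef e (phipre r j'.+1 Q) =
  \sum_(v : j'.+1.-tuple 'I_(N - sumn (mkseq (fun k => (e k).+1) a)).+1 |
          inS (N - sumn (mkseq (fun k => (e k).+1) a)) j'.+1 (map val v))
     piR r Q (mkseq (fun k => (e k).+1) a) (map val v) *
     ecoef j' (map val v) (mkseq (fun k => (e (a + k)%N).+1) j'.+1).
Proof.
move=> Hr HQ.
set s := mkseq (fun k => (e k).+1) a.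
set w := mkseq (fun k => (e (a + k)%N).+1) j'.+1.
set M := (N - sumn s)%N.
have Hsz : size s = a by rewrite size_mkseq.
pose Qe := \sum_(v : j'.+1.-tuple 'I_M.+1 | inS M j'.+1 (map val v))
   mC r (piR r Q s (map val v)) * mmono r (expo (s ++ map val v)).
have HQe : mcoef e (phipre r j'.+1 Qe) =
  \sum_(v : j'.+1.-tuple 'I_M.+1 | inS M j'.+1 (map val v))
     piR r Q s (map val v) * ecoef j' (map val v) w.
  rewrite /Qe (big_morph _ (phipreD r j'.+1) (phipre0 r j'.+1)) mcoef_sum.
  apply: eq_bigr => v Hv.
  rewrite phipreCM mcoefCM (coef_phipre_mono _ _ _ _ _ Hr).
  have -> : agree a e (expo (s ++ map val v)).
    apply/agreeP => k Hk; rewrite expo_cat_lt ?Hsz // /expo nth_mkseq //.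
  rewrite mul1r; congr (_ * _).
  rewrite /ecoef; transitivity (mcoef (expo w) (Ih j' a (expo (s ++ map val v)))).
    by apply: mcoef_eq => k Hk; rewrite /expo nth_mkseq.
  rewrite /Ih; congr (mcoef _ (ihara _ _)).
    by rewrite -{1}Hsz -[size s]addn0 expo_cat_ge.
  by apply: mmono_eq => k _; rewrite -Hsz expo_cat_ge.
have HQr : forall t, agree a e t -> mcoef t (Q - Qe) = 0.
  move=> t Ht; rewrite mcoefB /Qe mcoef_sum.
  under eq_bigr do rewrite mcoefCM mcoef_mmono.
  case: (pickP (fun v : j'.+1.-tuple 'I_M.+1 =>
      inS M j'.+1 (map val v) && agree r t (expo (s ++ map val v)))) => [v0 /andP[Hv0 Ha0]|Hnone].
    rewrite (bigD1 v0) //= Ha0 mulr1 big1 ?addr0.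
      by move/agreeP: Ha0 => Ha0; rewrite /piR (mcoef_eq _ _ _ _ Ha0) subrr.
    move=> v /andP[Hv Hne]; case: (boolP (agree r t (expo (s ++ map val v)))) => Hav; last by rewrite mulr0.
    case/eqP: Hne; apply: (tuple_eq_expo _ _ s); [exact: inS_pos Hv | exact: inS_pos Hv0 |].
    move=> k Hk; move/agreeP: Hav => <-; [move/agreeP: Ha0 => <- //|]; lia.
  rewrite big1 ?subr0; last first.
    move=> v Hv; move: (Hnone v); rewrite Hv /= => ->; by rewrite mulr0.
  apply/eqP; apply: contraT => Hne.
  have := HQ t Hne; rewrite Hr mkseqD.
  have -> : mkseq (fun k => (t k).+1) a = s.
    by apply: eq_in_mkseq => k Hk; move/agreeP: Ht => ->.
  set wt := mkseq _ j'.+1.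
  case/and3P => /eqP Hsize; rewrite all_cat sumn_cat => /andP[Has Haw] /eqP Hsum.
  have Hwt : inS M j'.+1 wt.
    by rewrite /inS size_mkseq eqxx Haw /M -Hsum addKn eqxx.
  have [v0 Hv0] : exists v : j'.+1.-tuple 'I_M.+1, map val v = wt.
    apply: tuple_of_seq; first by rewrite size_mkseq.
    apply/allP => x Hx; rewrite /M -Hsum addKn; exact: leq_sumn_mem.
  move: (Hnone v0); rewrite Hv0 Hwt /=.
  suff -> : agree r t (expo (s ++ wt)) by [].
  apply/agreeP => k Hk.
  have -> : s ++ wt = mkseq (fun k => (t k).+1) r.
    rewrite Hr mkseqD; congr (_ ++ _).
    by apply: eq_in_mkseq => i Hi; move/agreeP: Ht => ->.
  by rewrite /expo nth_mkseq.
have H0 : mcoef e (phipre r j'.+1 (Q - Qe)) = 0.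
  rewrite (mcoef_lin _ _ (phipre r j'.+1) (Q - Qe) (mbound r (Q - Qe)) e).
  - apply: big1 => f _; rewrite (coef_phipre_mono _ _ _ _ _ Hr).
    case: (boolP (agree a e (ef f))) => Ha; last by rewrite mul0r mulr0.
    by rewrite HQr // mul0r.
  - exact: phipreD.
  - exact: phipre0.
  - exact: phipreCM.
  - exact: mboundP.
rewrite {1}(_ : Q = (Q - Qe) + Qe); last by rewrite subrK.
by rewrite phipreD mcoefD H0 add0r HQe.
Qed.

Lemma sumn_mkseq (f : nat -> nat) n : sumn (mkseq f n) = (\sum_(k < n) f k)%N.
Proof. by rewrite /mkseq sumnE big_map -(big_mkord xpredT) /index_iota subn0. Qed.

Lemma inV_hom N r Q : inV N r Q -> mhom (N - r)%N Q.
Proof.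
move=> HQ e' Hne; have /and3P[_ _ /eqP Hs] := HQ e' Hne.
rewrite sumn_mkseq in Hs.
have : (\sum_(k < r) (e' k).+1 = \sum_(k < r) e' k + r)%N.
  under eq_bigr do rewrite -addn1.
  by rewrite big_split /= sum1_card card_ord.
lia.
Qed.

Lemma phipre_hom r j d (Q : mpoly r) : mhom d Q -> mhom d (phipre r j Q).
Proof.
move=> HQ; rewrite /phipre; apply: homD => //.
rewrite big_nat_cond; apply: hom_sum => i /andP[/andP[Hi1 Hir] _].
have Hs : forall o k, (k < r)%N -> mhom 1 (sfn r j i o k).
  move=> o k Hk; rewrite /sfn.
  case: ifP => H1; first exact: hom_mX.
  case: ifP => H2; first by apply: homB; apply: hom_mX; lia.
  apply: hom_mX; rewrite /bump; lia.
by apply: homB; apply: hom_msubst => // k Hk; apply: Hs.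
Qed.

Theorem lemma4p7 (N r j : nat) (Q : mpoly r) :
  (1 <= j)%N -> (j <= r - 1)%N -> inV N r Q ->
  (phi r j Q = 0 <->
   forall s : seq nat, inS (sumn s) (r - j) s -> (sumn s < N)%N ->
   forall w : j.-tuple 'I_(N - sumn s).+1, inS (N - sumn s) j (map val w) ->
   \sum_(v : j.-tuple 'I_(N - sumn s).+1 | inS (N - sumn s) j (map val v))
      piR r Q s (map val v) * ecoef j.-1 (map val v) (map val w) = 0).
Proof.
move=> Hj1 Hjr HQ.
case: j Hj1 Hjr => [//|j'] _ Hjr.
set a := (r - j'.+1)%N.
have Hr : r = (a + j'.+1)%N by rewrite /a; lia.
have Ha1 : (0 < a)%N by rewrite /a; lia.
rewrite phiE; split.
  move=> H0 s Hs Hlt w Hw.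
  pose e := expo (s ++ map val w).
  have Hsz : size s = a by case/and3P: Hs => /eqP.
  have Hps := inS_pos _ _ _ Hs; have Hpw := inS_pos _ _ _ Hw.
  have Hs_eq : mkseq (fun k => (e k).+1) a = s.
    rewrite -[RHS](mkseq_nth 1%N s) Hsz; apply: eq_in_mkseq => k Hk.
    rewrite /e expo_cat_lt ?Hsz // /expo prednK //.
    by move/allP: Hps; apply; apply: mem_nth; rewrite Hsz.
  have Hw_eq : mkseq (fun k => (e (a + k)%N).+1) j'.+1 = map val w.
    rewrite -[RHS](mkseq_nth 1%N (map val w)) size_map size_tuple; apply: eq_in_mkseq => k Hk.
    rewrite /e -Hsz expo_cat_ge /expo prednK //.
    by move/allP: Hpw; apply; apply: mem_nth; rewrite size_map size_tuple.
  have Hall : allev r e.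
    apply/allP => k; rewrite mem_iota add0n => /andP[_ Hk].
    have Hk' : (k < size (s ++ map val w))%N by rewrite size_cat Hsz size_map size_tuple -Hr.
    have : nth 1%N (s ++ map val w) k \in s ++ map val w by exact: mem_nth.
    rewrite mem_cat => /orP[Hx|Hx].
      case/and3P: Hs => _ /allP /(_ _ Hx) /andP[Ho H3] _.
      move: Ho H3; rewrite /e /expo; case: (nth _ _ _) => [|x] //= Ho H3; rewrite Ho /=; lia.
    case/and3P: Hw => _ /allP /(_ _ Hx) /andP[Ho H3] _.
    move: Ho H3; rewrite /e /expo; case: (nth _ _ _) => [|x] //= Ho H3; rewrite Ho /=; lia.
  have Hf := formula N r a j' Q e Hr HQ.
  rewrite Hs_eq Hw_eq in Hf.
  transitivity (mcoef e (phipre r j'.+1 Q)); first by rewrite Hf.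
  by have := congr1 (mcoef e) H0; rewrite mcoef_rte Hall mcoef0.
move=> Hyp; apply: mpoly_ext => e; rewrite mcoef0 mcoef_rte.
case: ifP => Hall //.
apply/eqP; apply: contraT => Hne.
have Hsum := phipre_hom r j'.+1 _ _ (inV_hom _ _ _ HQ) e Hne.
set s := mkseq (fun k => (e k).+1) a.
set w := mkseq (fun k => (e (a + k)%N).+1) j'.+1.
have Hev : forall k, (k < r)%N -> ~~ odd (e k) && (2 <= e k)%N.
  by move=> k Hk; move/allP: Hall; apply; rewrite mem_iota add0n Hk.
have Hsw : (sumn s + sumn w = \sum_(k < r) e k + r)%N.
  rewrite -sumn_cat /s /w -mkseqD -Hr sumn_mkseq.
  under eq_bigr do rewrite -addn1.
  by rewrite big_split /= sum1_card card_ord.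
have He0 : (2 <= \sum_(k < r) e k)%N.
  have Hr0 : (0 < r)%N by lia.
  rewrite (bigD1 (Ordinal Hr0)) //=; have := Hev 0%N Hr0; case/andP => _ H2; lia.
have Hsw' : (sumn s + sumn w = N)%N by lia.
have Hw0 : (0 < sumn w)%N by rewrite /w /mkseq /=; lia.
have Hs : inS (sumn s) a s.
  rewrite /inS size_mkseq eqxx eqxx andbT; apply/allP => x /mapP[k].
  rewrite mem_iota add0n => /andP[_ Hk] ->.
  have := Hev k ltac:(lia); case/andP => Ho H2 /=; rewrite Ho; lia.
have Hlt : (sumn s < N)%N by lia.
have Hwin : inS (N - sumn s) j'.+1 w.
  rewrite /inS size_mkseq eqxx -Hsw' addKn eqxx andbT; apply/allP => x /mapP[k].
  rewrite mem_iota add0n => /andP[_ Hk] ->.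
  have := Hev (a + k)%N ltac:(lia); case/andP => Ho H2 /=; rewrite Ho; lia.
have [w0 Hw0eq] : exists v : j'.+1.-tuple 'I_(N - sumn s).+1, map val v = w.
  apply: tuple_of_seq; first by rewrite size_mkseq.
  apply/allP => x Hx; rewrite -Hsw' addKn; exact: leq_sumn_mem.
have := Hyp s Hs Hlt w0; rewrite Hw0eq => /(_ Hwin) Hz.
move: Hne; rewrite (formula N r a j' Q e Hr HQ) -/s -/w.
move: Hz; rewrite -Hw0eq => Hz.
by rewrite Hz eqxx.
Qed.
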